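(* Let $\{C_i\}$ be the square cells of a Cartesian grid, each of side length $\Delta x>0$, and let $\Delta t>0$ be a global time step. Suppose the cell averages of the water height at time $t^n$ satisfy $h_i^n\ge 0$ for all $i$. For every edge $E$ let a real number (numerical mass flux) be given, conservatively: if $E$ separates cells $C_i$ and $C_j$, denote by $\mathcal H_{E,i}$ the flux across $E$ measured with respect to the outward normal of $C_i$, so that $\mathcal H_{E,j}=-\mathcal H_{E,i}$. Define $\mathcal H^+_{E,i}:=\max\{\mathcal H_{E,i},0\}$, the draining time $$\Delta t_{C_i,\mathrm{drain}}:=\frac{\Delta x\,h_i^n}{\sum_{E\subset\partial C_i}\mathcal H^+_{E,i}}\qquad(\text{set to }+\infty\text{ if the denominator is }0),$$ and, for each edge $E$ with $\mathcal H_{E,i}>0$ for one of its two adjacent cells $C_i$ (the upwind cell $C^-(E):=C_i$), the edge time step $\Delta t_E:=\min\{\Delta t,\Delta t_{C^-(E),\mathrm{drain}}\}$; for edges with zero flux put $\Delta t_E:=\Delta t$. Then the water heights produced by the modified finite volume update $$h_i^{n+1}=h_i^n-\frac{1}{\Delta x}\sum_{E\subset\partial C_i}\Delta t_E\,\mathcal H_{E,i}$$ satisfy $h_i^{n+1}\ge 0$ for every cell $C_i$.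
   Context: This is the first (water-height) component of a conservative finite volume scheme for the shallow water equations $h_t+\nabla\cdot(h\vec v)=0$, $(h\vec v)_t+\nabla\cdot(h\vec v\otimes\vec v+\tfrac g2h^2I)=-gh\nabla b$, written in the form $\mathbf u_i^{n+1}=\mathbf u_i^n-\frac{\Delta t}{\Delta x}\big(\sum_{E\subset\partial C_i}\mathcal F_E+\mathcal S_i\big)$, where $\mathcal F_E$ is an arbitrary numerical edge flux (averaged over the edge length and time step) and the first component of $\mathcal S_i$ is zero; $\mathcal H_{E,i}$ is the first component of $\mathcal F_E$ oriented outward from $C_i$. The modification replaces, edge by edge, the global time step $\Delta t$ multiplying the flux by the cut-off step $\Delta t_E$ (equivalently, the outgoing flux of a cell is set to zero after its draining time), while the solution is still advanced by the global step $\Delta t$. *)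

(* Defs.v *)
From Stdlib Require Import Reals ZArith.
Open Scope R_scope.

(* Edge fluxes (mass fluxes, first component of the numerical flux):
     Fx i j : flux across the vertical edge between cell (i,j) and (i+1,j),
              measured w.r.t. the outward normal of cell (i,j);
     Fy i j : flux across the horizontal edge between cell (i,j) and (i,j+1),
              measured w.r.t. the outward normal of cell (i,j).
   Conservation H_{E,j} = - H_{E,i} is built in via [Hflux]. *)

Inductive dir := East | West | North | South.

Definition cell := (Z * Z)%type.

Definition Hflux (Fx Fy : Z -> Z -> R) (c : cell) (d : dir) : R :=
  let (i, j) := c in
  match d with
  | East  => Fx i j
  | West  => - Fx (i - 1)%Z j
  | North => Fy i j
  | South => - Fy i (j - 1)%Z
  end.

Definition posp (x : R) : R := Rmax x 0.

Definition sum_edges (f : dir -> R) : R := f East + f West + f North + f South.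

(* Draining time of cell c; None encodes +infinity (zero denominator). *)
Definition drain (dx : R) (h : cell -> R) (Fx Fy : Z -> Z -> R) (c : cell)
  : option R :=
  let s := sum_edges (fun d => posp (Hflux Fx Fy c d)) in
  if Req_EM_T s 0 then None else Some (dx * h c / s).

Definition min_ext (dt : R) (o : option R) : R :=
  match o with None => dt | Some t => Rmin dt t end.

Definition dt_edge (dt dx : R) (h : cell -> R) (Fx Fy : Z -> Z -> R)
  (cl cr : cell) (f : R) : R :=
  if Rlt_dec 0 f then min_ext dt (drain dx h Fx Fy cl)
  else if Rlt_dec f 0 then min_ext dt (drain dx h Fx Fy cr)
  else dt.

Definition dtE (dt dx : R) (h : cell -> R) (Fx Fy : Z -> Z -> R)
  (c : cell) (d : dir) : R :=
  let (i, j) := c in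
  match d with
  | East  => dt_edge dt dx h Fx Fy (i, j) ((i + 1)%Z, j) (Fx i j)
  | West  => dt_edge dt dx h Fx Fy ((i - 1)%Z, j) (i, j) (Fx (i - 1)%Z j)
  | North => dt_edge dt dx h Fx Fy (i, j) (i, (j + 1)%Z) (Fy i j)
  | South => dt_edge dt dx h Fx Fy (i, (j - 1)%Z) (i, j) (Fy i (j - 1)%Z)
  end.

Definition h_next (dt dx : R) (h : cell -> R) (Fx Fy : Z -> Z -> R)
  (c : cell) : R :=
  h c - / dx * sum_edges (fun d => dtE dt dx h Fx Fy c d * Hflux Fx Fy c d).

(* Main.v *)
Require Import Defs.
From Stdlib Require Import Reals ZArith Lra.
Open Scope R_scope.

Lemma posp_ge0 x : 0 <= posp x.
Proof. unfold posp, Rmax; destruct Rle_dec; lra. Qed.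

Lemma posp_pos x : 0 < x -> posp x = x.
Proof. intro; unfold posp, Rmax; destruct Rle_dec; lra. Qed.

Lemma posp_npos x : ~ 0 < x -> posp x = 0.
Proof. intro; unfold posp, Rmax; destruct Rle_dec; lra. Qed.

Lemma S_ge0 Fx Fy c : 0 <= sum_edges (fun d => posp (Hflux Fx Fy c d)).
Proof. unfold sum_edges; pose proof (posp_ge0 (Hflux Fx Fy c East));
  pose proof (posp_ge0 (Hflux Fx Fy c West));
  pose proof (posp_ge0 (Hflux Fx Fy c North));
  pose proof (posp_ge0 (Hflux Fx Fy c South)); lra. Qed.

Lemma m_ge0 dx dt h Fx Fy c : 0 < dx -> 0 < dt -> (forall c, 0 <= h c) ->
  0 <= min_ext dt (drain dx h Fx Fy c).
Proof.
  intros Hdx Hdt Hh. unfold drain, min_ext.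
  destruct Req_EM_T as [e|n]; [lra|].
  pose proof (S_ge0 Fx Fy c). pose proof (Hh c).
  apply Rmin_glb; [lra|]. unfold Rdiv. apply Rmult_le_pos.
  apply Rmult_le_pos; lra. left; apply Rinv_0_lt_compat; lra.
Qed.

Lemma edge_le dx dt h Fx Fy c d : 0 < dx -> 0 < dt -> (forall c, 0 <= h c) ->
  dtE dt dx h Fx Fy c d * Hflux Fx Fy c d <=
  min_ext dt (drain dx h Fx Fy c) * posp (Hflux Fx Fy c d).
Proof.
  intros Hdx Hdt Hh. destruct c as [i j].
  destruct (Rlt_dec 0 (Hflux Fx Fy (i,j) d)) as [p|p].
  - rewrite (posp_pos _ p).
    destruct d; simpl in p |- *; unfold dt_edge;
    repeat (destruct Rlt_dec; try lra).
  - rewrite (posp_npos _ p). rewrite Rmult_0_r.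
    assert (0 <= dtE dt dx h Fx Fy (i,j) d).
    { destruct d; simpl; unfold dt_edge;
      repeat destruct Rlt_dec; try lra; apply m_ge0; auto. }
    apply Rnot_lt_le in p.
    rewrite <- (Rmult_0_r (dtE dt dx h Fx Fy (i,j) d)).
    apply Rmult_le_compat_l; auto.
Qed.

Theorem mainTheorem1 (dx dt : R) (h : cell -> R) (Fx Fy : Z -> Z -> R) :
  0 < dx -> 0 < dt -> (forall c, 0 <= h c) ->
  forall c, 0 <= h_next dt dx h Fx Fy c.
Proof.
  intros Hdx Hdt Hh c.
  set (m := min_ext dt (drain dx h Fx Fy c)).
  set (S := sum_edges (fun d => posp (Hflux Fx Fy c d))).
  assert (Hsum : sum_edges (fun d => dtE dt dx h Fx Fy c d * Hflux Fx Fy c d) <= m * S).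
  { unfold S, sum_edges. rewrite !Rmult_plus_distr_l.
    pose proof (edge_le dx dt h Fx Fy c East Hdx Hdt Hh).
    pose proof (edge_le dx dt h Fx Fy c West Hdx Hdt Hh).
    pose proof (edge_le dx dt h Fx Fy c North Hdx Hdt Hh).
    pose proof (edge_le dx dt h Fx Fy c South Hdx Hdt Hh). unfold m; lra. }
  assert (HmS : m * S <= dx * h c).
  { unfold m, drain, min_ext. fold S. pose proof (Hh c).
    destruct Req_EM_T as [e|n].
    - rewrite e, Rmult_0_r. apply Rmult_le_pos; lra.
    - pose proof (S_ge0 Fx Fy c). fold S in H0.
      apply Rle_trans with (dx * h c / S * S).
      + apply Rmult_le_compat_r; [lra|]. apply Rmin_r.
      + right. field. auto. }
  unfold h_next.
  assert (/ dx * sum_edges (fun d => dtE dt dx h Fx Fy c d * Hflux Fx Fy c d) <= h c).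
  { apply Rle_trans with (/dx * (dx * h c)).
    - apply Rmult_le_compat_l. left; apply Rinv_0_lt_compat; lra. lra.
    - right. field. lra. }
  lra.
Qed.
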